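(* Let $X$ be a nominal $\mathrm{Perm}$-set and $Y$ a nominal $\mathrm{Sb}$-set. (1) If $\dim(X)\le 1$, then the unit $\eta_X\colon X\to UF(X)$, $\eta_X(x)=[\mathrm{id},x]$, is an isomorphism. (2) If $\dim(Y)\le 1$, then the counit $\epsilon_Y\colon FU(Y)\to Y$, $\epsilon_Y([m,y])=m\cdot y$, is an isomorphism.
   Context: Atoms $\mathbb{A}$ (countably infinite); $\mathrm{Sb}$ = monoid of functions $\mathbb{A}\to\mathbb{A}$ that are the identity outside a finite set, under composition; $\mathrm{Perm}\subseteq\mathrm{Sb}$ the bijections. For $M\in\{\mathrm{Sb},\mathrm{Perm}\}$: nominal $M$-sets are sets with $M$-action in which every $x$ has a finite support $C\subseteq\mathbb{A}$ (meaning $m_1|_C=m_2|_C\Rightarrow m_1x=m_2x$ for $m_i\in M$); each $x$ has a least finite support $\mathrm{supp}(x)$; $\dim(X)=\max_x|\mathrm{supp}(x)|$. $U$ forgets from nominal $\mathrm{Sb}$-sets to nominal $\mathrm{Perm}$-sets. For a nominal $\mathrm{Perm}$-set $X$, $F(X)=(\mathrm{Sb}\times X)/{\sim}$, $\sim$ the least equivalence containing $(m,gx)\sim(mg,x)$ ($g\in\mathrm{Perm}$) and $(m,x)\sim(m',x)$ if $m|_C=m'|_C$ for some $\mathrm{Perm}$-support $C$ of $x$; classes $[m,x]$, action $n\cdot[m,x]=[nm,x]$. $F$ is left adjoint to $U$ with the stated unit and counit. *)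

(* Defs.v *)
(* Atoms = nat; finite sets of atoms = lists. *)
From Stdlib Require Import List Relations ClassicalEpsilon.
Import ListNotations.

Definition atom := nat.

Definition fin_nontriv (f : atom -> atom) : Prop :=
  exists C : list atom, forall a, ~ In a C -> f a = a.

Record Sb := mkSb { sb_fun :> atom -> atom; sb_finite : fin_nontriv sb_fun }.

Lemma fin_id : fin_nontriv (fun a => a).
Proof. exists []; auto. Qed.
Definition sb_id : Sb := @mkSb (fun a => a) fin_id.

Lemma fin_comp (m n : Sb) : fin_nontriv (fun a => m (n a)).
Proof.
  destruct (sb_finite m) as [C HC]; destruct (sb_finite n) as [D HD].
  exists (C ++ D); intros a Ha.
  rewrite HD; [apply HC|]; intro; apply Ha; apply in_or_app; auto.
Qed.
Definition sb_comp (m n : Sb) : Sb := @mkSb (fun a => m (n a)) (fin_comp m n).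

Definition is_bij {A B : Type} (f : A -> B) : Prop :=
  (forall a b, f a = f b -> a = b) /\ (forall b, exists a, f a = b).

Record Perm := mkPerm { perm_sb :> Sb; perm_bij : is_bij (sb_fun perm_sb) }.

Lemma bij_id : is_bij (sb_fun sb_id).
Proof. split; [auto | intros b; exists b; reflexivity]. Qed.
Definition perm_id : Perm := @mkPerm sb_id bij_id.

Lemma bij_comp (g h : Perm) : is_bij (sb_fun (sb_comp g h)).
Proof.
  destruct (perm_bij g) as [ig sg]; destruct (perm_bij h) as [ih sh].
  split; simpl.
  - intros a b E; auto.
  - intros b; destruct (sg b) as [c Hc]; destruct (sh c) as [a Ha].
    exists a; rewrite Ha; exact Hc.
Qed.
Definition perm_comp (g h : Perm) : Perm := @mkPerm (sb_comp g h) (bij_comp g h).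

Definition agree_on (C : list atom) (f g : atom -> atom) : Prop :=
  forall a, In a C -> f a = g a.

Definition sb_supports {X : Type} (act : Sb -> X -> X) (C : list atom) (x : X) :=
  forall m1 m2 : Sb, agree_on C m1 m2 -> act m1 x = act m2 x.
Definition perm_supports {X : Type} (act : Perm -> X -> X) (C : list atom) (x : X) :=
  forall g1 g2 : Perm, agree_on C g1 g2 -> act g1 x = act g2 x.

Definition least_support (supp : list atom -> Prop) (C : list atom) : Prop :=
  supp C /\ forall D, supp D -> incl C D.

Record NomPerm := {
  pcar :> Type;
  pact : Perm -> pcar -> pcar;
  pact_id : forall x, pact perm_id x = x;
  pact_comp : forall g h x, pact (perm_comp g h) x = pact g (pact h x);
  pact_fin : forall x, exists C, perm_supports pact C x }.

Record NomSb := {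
  scar :> Type;
  sact : Sb -> scar -> scar;
  sact_id : forall x, sact sb_id x = x;
  sact_comp : forall m n x, sact (sb_comp m n) x = sact m (sact n x);
  sact_fin : forall x, exists C, sb_supports sact C x }.

Definition dim_le1_perm (X : NomPerm) : Prop :=
  forall x : X, exists C, least_support (fun D => perm_supports (pact X) D x) C
                          /\ length C <= 1.
Definition dim_le1_sb (Y : NomSb) : Prop :=
  forall y : Y, exists C, least_support (fun D => sb_supports (sact Y) D y) C
                          /\ length C <= 1.

Lemma U_fin (Y : NomSb) (y : Y) :
  exists C, perm_supports (fun g : Perm => sact Y g) C y.
Proof.
  destruct (sact_fin Y y) as [C HC]; exists C; intros g1 g2 E; apply HC; exact E.
Qed.
Definition nomU (Y : NomSb) : NomPerm :=
  {| pcar := scar Y;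
     pact := fun g => sact Y (perm_sb g);
     pact_id := sact_id Y;
     pact_comp := fun g h => sact_comp Y g h;
     pact_fin := U_fin Y |}.

(* free functor F: (Sb x X)/~ *)
Inductive Fbase (X : NomPerm) : Sb * pcar X -> Sb * pcar X -> Prop :=
| Fb_perm : forall (m : Sb) (g : Perm) (x : X),
    Fbase X (m, pact X g x) (sb_comp m g, x)
| Fb_supp : forall (m m' : Sb) (x : X) (C : list atom),
    perm_supports (pact X) C x -> agree_on C m m' -> Fbase X (m, x) (m', x).

Definition Fsim (X : NomPerm) := clos_refl_sym_trans _ (Fbase X).

Definition Fcar (X : NomPerm) : Type :=
  { P : Sb * pcar X -> Prop | exists p, P = Fsim X p }.

Definition Fclass (X : NomPerm) (p : Sb * pcar X) : Fcar X :=
  exist _ (Fsim X p) (ex_intro _ p eq_refl).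

Definition Frepr (X : NomPerm) (c : Fcar X) : Sb * pcar X :=
  proj1_sig (constructive_indefinite_description _ (proj2_sig c)).

Definition Fact (X : NomPerm) (n : Sb) (c : Fcar X) : Fcar X :=
  Fclass X (sb_comp n (fst (Frepr X c)), snd (Frepr X c)).

Definition unitF (X : NomPerm) (x : X) : Fcar X := Fclass X (sb_id, x).

Definition counitF (Y : NomSb) (c : Fcar (nomU Y)) : scar Y :=
  sact Y (fst (Frepr (nomU Y) c)) (snd (Frepr (nomU Y) c)).

(* Main.v *)
Require Import Defs.
From Stdlib Require Import List Relations ClassicalEpsilon FunctionalExtensionality PropExtensionality ProofIrrelevance Lia Arith.
Import ListNotations.

Lemma Fsim_refl X p : Fsim X p p. Proof. apply rst_refl. Qed.
Lemma Fsim_sym X p q : Fsim X p q -> Fsim X q p. Proof. apply rst_sym. Qed.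
Lemma Fsim_trans X p q r : Fsim X p q -> Fsim X q r -> Fsim X p r.
Proof. apply rst_trans. Qed.
Lemma Fsim_base X p q : Fbase X p q -> Fsim X p q. Proof. apply rst_step. Qed.

Lemma Fsim_ext X (m m' : Sb) (x : pcar X) : (forall a, m a = m' a) -> Fsim X (m,x) (m',x).
Proof.
  intros E. destruct (pact_fin X x) as [C HC].
  apply Fsim_base. eapply Fb_supp; [exact HC|]. intros a _; apply E.
Qed.

Lemma class_eq X p q : Fsim X p q -> Fclass X p = Fclass X q.
Proof.
  intros H. unfold Fclass. apply subset_eq_compat.
  apply functional_extensionality; intro r; apply propositional_extensionality; split; intro.
  - eapply Fsim_trans; [apply Fsim_sym; exact H| assumption].
  - eapply Fsim_trans; eassumption.
Qed.

Lemma repr_spec X c : proj1_sig c = Fsim X (Frepr X c).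
Proof.
  unfold Frepr. destruct (constructive_indefinite_description _ _) as [q Hq]; simpl. exact Hq.
Qed.

Lemma class_repr X c : Fclass X (Frepr X c) = c.
Proof.
  pose proof (repr_spec X c) as H.
  destruct c as [P HP]. unfold Fclass. simpl in H.
  apply subset_eq_compat. symmetry. exact H.
Qed.

Lemma repr_class X p : Fsim X p (Frepr X (Fclass X p)).
Proof.
  pose proof (repr_spec X (Fclass X p)) as H. simpl in H.
  set (r := Frepr X (Fclass X p)) in *. clearbody r.
  rewrite (equal_f H r). apply Fsim_refl.
Qed.

Lemma Fsim_comp X (n : Sb) p q : Fsim X p q ->
  Fsim X (sb_comp n (fst p), snd p) (sb_comp n (fst q), snd q).
Proof.
  induction 1.
  - destruct H; simpl.
    + eapply Fsim_trans. apply Fsim_base. apply Fb_perm.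
      apply Fsim_ext. reflexivity.
    + apply Fsim_base. eapply Fb_supp; [exact H|]. intros a Ha; simpl; rewrite H0; auto.
  - apply Fsim_refl.
  - apply Fsim_sym; auto.
  - eapply Fsim_trans; eauto.
Qed.

Definition swf (a b c : atom) : atom :=
  if Nat.eq_dec c a then b else if Nat.eq_dec c b then a else c.

Lemma swf_fin a b : fin_nontriv (swf a b).
Proof.
  exists [a; b]. intros c Hc. unfold swf.
  destruct (Nat.eq_dec c a); [subst; exfalso; apply Hc; simpl; auto|].
  destruct (Nat.eq_dec c b); [subst; exfalso; apply Hc; simpl; auto|]. auto.
Qed.

Lemma swf_inv a b c : swf a b (swf a b c) = c.
Proof.
  unfold swf. repeat (destruct Nat.eq_dec; subst; try lia; auto).
Qed.

Definition swsb a b : Sb := mkSb (swf a b) (swf_fin a b).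
Lemma swf_bij a b : is_bij (sb_fun (swsb a b)).
Proof.
  split; simpl.
  - intros x y E. rewrite <- (swf_inv a b x), <- (swf_inv a b y), E; auto.
  - intros y. exists (swf a b y). apply swf_inv.
Qed.
Definition swp a b : Perm := mkPerm (swsb a b) (swf_bij a b).

Lemma swp_a a b : (swp a b : Sb) a = b.
Proof. simpl. unfold swf. destruct Nat.eq_dec; lia. Qed.
Lemma swp_other a b c : c <> a -> c <> b -> (swp a b : Sb) c = c.
Proof. simpl. unfold swf. intros. repeat destruct Nat.eq_dec; lia. Qed.

Definition sbf (a c x : atom) : atom := if Nat.eq_dec x a then c else x.
Lemma sbf_fin a c : fin_nontriv (sbf a c).
Proof. exists [a]. intros x Hx. unfold sbf. destruct Nat.eq_dec; subst; auto. exfalso; apply Hx; simpl; auto. Qed.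
Definition subst1 a c : Sb := mkSb (sbf a c) (sbf_fin a c).

Lemma fresh (l : list atom) : exists b, ~ In b l.
Proof.
  assert (forall l : list atom, exists n, forall x, In x l -> x < n) as H.
  { induction l0 as [|x l0 [n Hn]]. exists 0; simpl; tauto.
    exists (S (max x n)). intros y [->|Hy]; [lia|]. specialize (Hn y Hy); lia. }
  destruct (H l) as [n Hn]. exists n. intro Hi. specialize (Hn n Hi). lia.
Qed.

Lemma len1 (L : list atom) : length L <= 1 -> L = [] \/ exists a, L = [a].
Proof. destruct L as [|a [|b L]]; simpl; intros; auto; [right; eauto| lia]. Qed.
Section Unit.
Variable X : NomPerm.
Hypothesis Hdim : dim_le1_perm X.

Definition R (p : Sb * pcar X) (y : pcar X) : Prop :=
  exists C (h : Perm), perm_supports (pact X) C (snd p) /\ agree_on C (fst p) h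
                       /\ y = pact X h (snd p).

Lemma least_ex (x : pcar X) : exists L, least_support (fun D => perm_supports (pact X) D x) L
   /\ (L = [] \/ exists a, L = [a]).
Proof. destruct (Hdim x) as [L [HL Hl]]. exists L; split; auto. apply len1; auto. Qed.

Lemma R_uniq p y y' : R p y -> R p y' -> y = y'.
Proof.
  intros [C [h [HC [Ah ->]]]] [C' [h' [HC' [Ah' ->]]]].
  destruct (least_ex (snd p)) as [L [[HL HLm] _]].
  apply HL. intros a Ha. rewrite <- Ah, <- Ah'; auto.
  apply (HLm _ HC'); auto. apply (HLm _ HC); auto.
Qed.

Lemma R_total m x : exists y, R (m, x) y.
Proof.
  destruct (least_ex x) as [L [[HL _] [->|[a ->]]]].
  - exists (pact X perm_id x). exists [], perm_id. simpl; repeat split; auto.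
    intros a [].
  - exists (pact X (swp a (m a)) x). exists [a], (swp a (m a)). simpl; repeat split; auto.
    intros b [<-|[]]. symmetry; apply swp_a.
Qed.

Lemma R_supp (m m' : Sb) x C y : perm_supports (pact X) C x -> agree_on C m m' ->
  R (m, x) y -> R (m', x) y.
Proof.
  intros HC Am [C' [h [HC' [Ah ->]]]]. simpl in *.
  destruct (least_ex x) as [L [[HL HLm] _]].
  exists L, h. simpl; repeat split; auto.
  intros a Ha. rewrite <- Am by (apply (HLm _ HC); auto). apply Ah. apply (HLm _ HC'); auto.
Qed.

Lemma R_perm_back (m : Sb) (g : Perm) x y : R (sb_comp m g, x) y -> R (m, pact X g x) y.
Proof.
  intros [C [h [HC [Ah ->]]]]. simpl in *.
  destruct (least_ex x) as [L [[HL HLm] [->|[a ->]]]].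
  - exists [], perm_id. simpl; repeat split.
    + intros k1 k2 _. rewrite <- !pact_comp. apply HL. intros b [].
    + intros b [].
    + rewrite pact_id. apply HL. intros b [].
  - exists [(g : Sb) a], (swp ((g:Sb) a) (m ((g:Sb) a))). simpl; repeat split.
    + intros k1 k2 Ak. rewrite <- !pact_comp. apply HL. intros b [<-|[]].
      simpl. apply Ak. simpl; auto.
    + intros b [<-|[]]. symmetry. apply (swp_a ((g:Sb) a)).
    + rewrite <- pact_comp. apply HL. intros b [<-|[]].
      rewrite <- Ah by (apply (HLm _ HC); simpl; auto).
      simpl. pose proof (swp_a ((g:Sb) a) (m ((g:Sb) a))) as E. simpl in E. rewrite E. reflexivity.
Qed.

Lemma R_base p q : Fbase X p q -> forall y, R p y <-> R q y.
Proof.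
  intros H y. destruct H as [m g x | m m' x C HC Am].
  - split; intro Hy.
    + destruct (R_total (sb_comp m g) x) as [y0 Hy0].
      rewrite (R_uniq _ _ _ Hy (R_perm_back _ _ _ _ Hy0)). exact Hy0.
    + apply R_perm_back; auto.
  - split; apply R_supp with C; auto. intros a Ha; symmetry; auto.
Qed.

Lemma R_sim p q : Fsim X p q -> forall y, R p y <-> R q y.
Proof.
  induction 1; intro w.
  - apply R_base; auto.
  - tauto.
  - rewrite IHclos_refl_sym_trans; tauto.
  - rewrite IHclos_refl_sym_trans1; auto.
Qed.

Lemma part1 : is_bij (unitF X) /\
     (forall (g : Perm) (x : X), unitF X (pact X g x) = Fact X g (unitF X x)).
Proof.
  split; [split|].
  - intros x x' E.
    assert (Fsim X (sb_id, x) (sb_id, x')) as S.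
    { unfold unitF, Fclass in E. apply (f_equal (@proj1_sig _ _)) in E. simpl in E.
      rewrite E. apply Fsim_refl. }
    destruct (pact_fin X x) as [C HC].
    assert (R (sb_id, x) x) as R0.
    { exists C, perm_id. simpl; repeat split; auto. rewrite pact_id; auto. }
    apply (R_sim _ _ S) in R0. destruct R0 as [C' [h [HC' [Ah E']]]]. simpl in *.
    rewrite E'. transitivity (pact X perm_id x'); [|apply pact_id]. apply HC'. intros a Ha. symmetry; apply Ah; auto.
  - intros c. rewrite <- (class_repr X c). destruct (Frepr X c) as [m x].
    destruct (R_total m x) as [y [C [h [HC [Ah ->]]]]]. simpl in *.
    exists (pact X h x). apply class_eq.
    eapply Fsim_trans. apply Fsim_base. apply Fb_perm.
    apply Fsim_base. eapply Fb_supp. exact HC. intros a Ha. simpl. symmetry; auto.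
  - intros g x. unfold Fact. apply class_eq.
    pose proof (repr_class X (sb_id, x)) as H. fold (unitF X x) in H.
    destruct (Frepr X (unitF X x)) as [r1 r2]. simpl.
    eapply Fsim_trans. apply Fsim_base. apply Fb_perm.
    eapply Fsim_trans. apply Fsim_ext with (m' := sb_comp g sb_id). reflexivity.
    apply (Fsim_comp X g _ _ H).
Qed.
End Unit.
Section Counit.
Variable Y : NomSb.
Hypothesis Hdim : dim_le1_sb Y.

Lemma sleast_ex (y : scar Y) : exists L, least_support (fun D => sb_supports (sact Y) D y) L
   /\ (L = [] \/ exists a, L = [a]).
Proof. destruct (Hdim y) as [L [HL Hl]]. exists L; split; auto. apply len1; auto. Qed.

Lemma perm_supp_sb C (y : scar Y) : perm_supports (pact (nomU Y)) C y -> sb_supports (sact Y) C y.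
Proof.
  intros HC. destruct (sleast_ex y) as [L [[HL _] [->|[a ->]]]].
  - intros m1 m2 _. apply HL. intros b [].
  - destruct (in_dec Nat.eq_dec a C) as [Ha|Ha].
    + intros m1 m2 A. apply HL. intros b [<-|[]]. apply A; auto.
    + assert (forall m, sact Y m y = y) as K.
      { destruct (fresh (a :: C)) as [b Hb].
        assert (a <> b) as Hab by (intro; subst; apply Hb; simpl; auto).
        assert (Hsw : sact Y (swp a b) y = y).
        { change (pact (nomU Y) (swp a b) y = y).
          transitivity (pact (nomU Y) perm_id y); [|apply (pact_id (nomU Y))].
          apply HC. intros c Hc. apply swp_other; intro; subst; auto. apply Hb; simpl; auto. }
        assert (Hm : forall m, sact Y m y = sact Y (sb_comp m (swp a b)) y).
        { intro m. rewrite sact_comp, Hsw. reflexivity. }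
        assert (Hb' : sact Y (subst1 a b) y = y).
        { rewrite <- (sact_id Y y) at 2. rewrite (Hm sb_id). apply HL. intros c [<-|[]].
          simpl. unfold sbf, swf. repeat destruct Nat.eq_dec; lia. }
        intro m. transitivity (sact Y (subst1 a (m a)) y).
        { apply HL. intros c [<-|[]]. simpl. unfold sbf. destruct Nat.eq_dec; lia. }
        transitivity (sact Y (subst1 a b) y); [|exact Hb']. rewrite (Hm (subst1 a (m a))). apply HL. intros c [<-|[]].
        simpl. unfold sbf, swf. repeat destruct Nat.eq_dec; lia. }
      intros m1 m2 _. rewrite !K; auto.
Qed.

Lemma W p q : Fsim (nomU Y) p q -> sact Y (fst p) (snd p) = sact Y (fst q) (snd q).
Proof.
  induction 1.
  - destruct H as [m g x | m m' x C HC Am]; simpl.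
    + rewrite sact_comp; auto.
    + apply (perm_supp_sb C x HC); auto.
  - auto.
  - auto.
  - congruence.
Qed.

Lemma N (m : Sb) (y : scar Y) : Fsim (nomU Y) (m, y) (sb_id, sact Y m y).
Proof.
  destruct (sleast_ex y) as [L [[HL _] [->|[a ->]]]].
  - assert (sact Y m y = y) as E.
    { rewrite <- (sact_id Y y) at 2. apply HL. intros b []. }
    rewrite E. apply Fsim_base. apply Fb_supp with []; [|intros b []].
    intros g1 g2 _. apply HL. intros b [].
  - eapply Fsim_trans.
    { apply Fsim_base. apply Fb_supp with (C := [a]) (m' := swp a (m a)).
      - intros g1 g2 A. apply HL. exact A.
      - intros b [<-|[]]. symmetry; apply swp_a. }
    eapply Fsim_trans. apply Fsim_ext with (m' := sb_comp sb_id (swp a (m a))). reflexivity.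
    replace (sact Y m y) with (pact (nomU Y) (swp a (m a)) y).
    + apply Fsim_sym. apply Fsim_base. apply Fb_perm.
    + simpl. apply HL. intros b [<-|[]]. apply (swp_a a).
Qed.

Lemma part2 : is_bij (counitF Y) /\
     (forall (n : Sb) (c : Fcar (nomU Y)), counitF Y (Fact (nomU Y) n c) = sact Y n (counitF Y c)).
Proof.
  split; [split|].
  - intros c c' E. rewrite <- (class_repr _ c), <- (class_repr _ c').
    unfold counitF in E.
    destruct (Frepr (nomU Y) c) as [m y], (Frepr (nomU Y) c') as [m' y']. simpl in E.
    transitivity (Fclass (nomU Y) (sb_id, sact Y m y)); [apply class_eq; apply N|].
    rewrite E. symmetry; apply class_eq; apply N.
  - intros y. exists (Fclass (nomU Y) (sb_id, (y : pcar (nomU Y)))). unfold counitF.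
    rewrite <- (W _ _ (repr_class (nomU Y) (sb_id, (y : pcar (nomU Y))))). apply sact_id.
  - intros n c. unfold counitF, Fact.
    rewrite <- (W _ _ (repr_class _ _)). simpl. apply sact_comp.
Qed.
End Counit.

Theorem mainTheorem6 (X : NomPerm) (Y : NomSb) :
  (dim_le1_perm X ->
     is_bij (unitF X) /\
     (forall (g : Perm) (x : X), unitF X (pact X g x) = Fact X g (unitF X x)))
  /\
  (dim_le1_sb Y ->
     is_bij (counitF Y) /\
     (forall (n : Sb) (c : Fcar (nomU Y)), counitF Y (Fact (nomU Y) n c) = sact Y n (counitF Y c))).
Proof.
  split; [apply part1 | apply part2].
Qed.
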